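(* Given a unit implicational base $(X,\Sigma)$, one can decide whether $\Sigma$ admits a rank function $\rho$, and compute such a $\rho$ if it exists, in time polynomial in the size of $(X,\Sigma)$.
   Context: A unit implicational base on a finite set $X$ is a set $\Sigma$ of implications $A\to b$ with $A\subseteq X$, $b\in X$. A rank function on $\Sigma$ is a map $\rho:X\to\mathbb{N}$ such that $\rho(a)=\rho(b)+1$ whenever $A\to b\in\Sigma$ and $a\in A$. *)

(* Defs.v *)
From Stdlib Require Import List Arith.
Import ListNotations.

(* The ground set X is {0, ..., n-1}; an implication A -> b is a pair
   (A, b) with A a list of elements of X (read as a set) and b in X. *)
Definition implication := (list nat * nat)%type.

Definition wf_base (n : nat) (Sigma : list implication) : Prop :=
  forall A b, In (A, b) Sigma -> b < n /\ (forall a, In a A -> a < n).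

Definition is_rank (Sigma : list implication) (rho : nat -> nat) : Prop :=
  forall A b, In (A, b) Sigma -> forall a, In a A -> rho a = rho b + 1.

(* Each executed instruction costs one time step.
   Arithmetic is restricted to +1 / -1, so all values stay polynomially
   bounded in (input values + elapsed time): this is a standard model
   polynomially equivalent to Turing machines. *)
Inductive instr : Type :=
| Inc   (r : nat)
| Dec   (r : nat)              (* R[r] := R[r] - 1  (truncated) *)
| Mov   (d s : nat)
| Ld    (d a : nat)
| St    (a s : nat)
| Jz    (r : nat) (l : nat)
| Jmp   (l : nat).

Definition program := list instr.

Record config : Type := Cfg { pc : nat; regs : nat -> nat; mem : nat -> nat }.

Definition upd (f : nat -> nat) (i v : nat) : nat -> nat :=
  fun j => if Nat.eqb j i then v else f j.

Definition halted (P : program) (c : config) : Prop := length P <= pc c.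

Definition step (P : program) (c : config) : config :=
  match nth_error P (pc c) with
  | None => c
  | Some i =>
    let R := regs c in let M := mem c in let p := pc c in
    match i with
    | Inc r     => Cfg (S p) (upd R r (S (R r))) M
    | Dec r     => Cfg (S p) (upd R r (pred (R r))) M
    | Mov d s   => Cfg (S p) (upd R d (R s)) M
    | Ld d a    => Cfg (S p) (upd R d (M (R a))) M
    | St a s    => Cfg (S p) R (upd M (R a) (R s))
    | Jz r l    => if Nat.eqb (R r) 0 then Cfg l R M else Cfg (S p) R M
    | Jmp l     => Cfg l R M
    end
  end.

Fixpoint exec (P : program) (k : nat) (c : config) : config :=
  match k with 0 => c | S k' => exec P k' (step P c) end.

Definition init (w : list nat) : config :=
  Cfg 0 (fun _ => 0) (fun i => nth i w 0).

(* [n; m; |A_1|; A_1 ...; b_1; ...; |A_m|; A_m ...; b_m] *)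
Definition encode_impl (ab : implication) : list nat :=
  length (fst ab) :: fst ab ++ [snd ab].

Definition encode (n : nat) (Sigma : list implication) : list nat :=
  n :: length Sigma :: flat_map encode_impl Sigma.

Definition base_size (n : nat) (Sigma : list implication) : nat :=
  n + fold_right (fun ab s => length (fst ab) + 1 + s) 0 Sigma.

Definition correct_output (Sigma : list implication) (M : nat -> nat) : Prop :=
  ((exists rho, is_rank Sigma rho) <-> M 0 <> 0) /\
  (M 0 <> 0 -> is_rank Sigma (fun x => M (1 + x))).

(* Main.v *)
Require Import Defs.
From Stdlib Require Import List Arith Lia FunctionalExtensionality Classical.
Import ListNotations.

Definition reachP (P : program) (c : config) (Q : config -> Prop) (k : nat) :=
  exists t, t <= k /\ Q (exec P t c).

Lemma reachP_done P c (Q : config -> Prop) k : Q c -> reachP P c Q k.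
Proof. intros H; exists 0; split; [lia|exact H]. Qed.

Lemma reachP_step P c Q k : reachP P (step P c) Q k -> reachP P c Q (S k).
Proof. intros [t [Ht HQ]]; exists (S t); split; [lia|exact HQ]. Qed.

Lemma exec_add P a b c : exec P (a + b) c = exec P b (exec P a c).
Proof. revert c; induction a; intros c; simpl; auto. Qed.

Lemma reachP_seq P c (Q1 Q2 : config -> Prop) k1 k2 :
  reachP P c Q1 k1 -> (forall c', Q1 c' -> reachP P c' Q2 k2) -> reachP P c Q2 (k1 + k2).
Proof.
  intros [t1 [H1 HQ1]] H. destruct (H _ HQ1) as [t2 [H2 HQ2]].
  exists (t1 + t2); split; [lia|]. rewrite exec_add; exact HQ2.
Qed.

Lemma reachP_mono P c (Q : config -> Prop) k1 k2 : k1 <= k2 -> reachP P c Q k1 -> reachP P c Q k2.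
Proof. intros Hk [t [H1 H2]]; exists t; split; [lia|auto]. Qed.

Lemma reachP_weak P c (Q1 Q2 : config -> Prop) k : (forall c, Q1 c -> Q2 c) -> reachP P c Q1 k -> reachP P c Q2 k.
Proof. intros HQ [t [H1 H2]]; exists t; split; auto. Qed.

Lemma upd_same f i v : upd f i v i = v.
Proof. unfold upd; rewrite Nat.eqb_refl; auto. Qed.
Lemma upd_other f i v j : j <> i -> upd f i v j = f j.
Proof. unfold upd; intros H; apply Nat.eqb_neq in H; rewrite H; auto. Qed.

Lemma add_loop P l d s : d <> s ->
  nth_error P l = Some (Jz s (S (S (S (S l))))) -> nth_error P (S l) = Some (Inc d) ->
  nth_error P (S (S l)) = Some (Dec s) -> nth_error P (S (S (S l))) = Some (Jmp l) ->
  forall R M, reachP P (Cfg l R M) (fun c => c = Cfg (S (S (S (S l)))) (upd (upd R d (R d + R s)) s 0) M) (4 * R s + 1).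
Proof.
  intros Hds H0 H1 H2 H3 R M. remember (R s) as v eqn:Hv. revert R Hv.
  induction v; intros R Hv.
  - apply reachP_step. unfold step; simpl pc; rewrite H0; simpl regs; rewrite <- Hv. simpl.
    apply reachP_done. f_equal. apply functional_extensionality; intros j.
    unfold upd. destruct (Nat.eqb j s) eqn:E; [apply Nat.eqb_eq in E; subst; auto|].
    destruct (Nat.eqb j d) eqn:E2; [apply Nat.eqb_eq in E2; subst; lia|auto].
  - replace (4 * S v + 1) with (S (S (S (S (4 * v + 1))))) by lia.
    apply reachP_step. unfold step; simpl pc; rewrite H0; simpl regs; rewrite <- Hv. simpl.
    apply reachP_step. unfold step; simpl pc; rewrite H1; simpl.
    apply reachP_step. unfold step; simpl pc; rewrite H2; simpl.
    apply reachP_step. unfold step; simpl pc; rewrite H3; simpl.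
    eapply reachP_weak; [|apply (IHv (upd (upd R d (S (R d))) s (pred (upd R d (S (R d)) s))))].
    + intros c Hc; rewrite Hc. f_equal. apply functional_extensionality; intros j.
      unfold upd. destruct (Nat.eqb j s) eqn:E; auto.
      destruct (Nat.eqb j d) eqn:E2; auto. rewrite (proj2 (Nat.eqb_neq d s)); [|auto]. rewrite Nat.eqb_refl.
      lia.
    + unfold upd. rewrite Nat.eqb_refl. rewrite (proj2 (Nat.eqb_neq s d)); [|auto]. lia.
Qed.

Definition prog : program := [
 (*0*) Inc 1; Ld 2 0; Ld 3 1; Mov 7 1; Inc 7; Mov 8 3;
 (*6*) Jz 8 16; Ld 9 7; Jz 9 12; Inc 7; Dec 9; Jmp 8;
 (*12*) Inc 7; Inc 7; Dec 8; Jmp 6;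
 (*16*) Mov 4 7; Mov 21 2;
 (*18*) Jz 21 26; Mov 11 2; Jz 11 24; Inc 5; Dec 11; Jmp 20; Dec 21; Jmp 18;
 (*26*) Mov 6 0; Mov 7 1; Inc 7; Mov 8 3;
 (*30*) Jz 8 83; Ld 9 7; Inc 7; Mov 10 7; Mov 11 9;
 (*35*) Jz 11 39; Inc 10; Dec 11; Jmp 35;
 (*39*) Ld 12 10; Mov 13 9;
 (*41*) Jz 13 80; Ld 14 7; Inc 7; Dec 13;
 (*45*) Mov 15 4; Mov 11 14;
 (*47*) Jz 11 51; Inc 15; Dec 11; Jmp 47;
 (*51*) Ld 17 15; Mov 16 4; Mov 11 12;
 (*54*) Jz 11 58; Inc 16; Dec 11; Jmp 54;
 (*58*) Ld 18 16; Inc 18; Mov 19 17; Mov 20 18;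
 (*62*) Jz 19 67; Jz 20 69; Dec 19; Dec 20; Jmp 62;
 (*67*) Jz 20 41; Jmp 75;
 (*69*) Jz 5 97; Dec 5; Mov 6 1; Dec 17; St 16 17; Jmp 41;
 (*75*) Jz 5 97; Dec 5; Mov 6 1; St 15 18; Jmp 41;
 (*80*) Inc 7; Dec 8; Jmp 30;
 (*83*) Jz 6 85; Jmp 26;
 (*85*) Mov 22 4; Mov 23 1; Mov 21 2;
 (*88*) Jz 21 95; Ld 24 22; St 23 24; Inc 22; Inc 23; Dec 21; Jmp 88;
 (*95*) St 0 1; Jmp 98;
 (*97*) St 0 0 ].

Lemma prog_len : length prog = 98. Proof. reflexivity. Qed.

Lemma reachP_step' P c Q k : 1 <= k -> reachP P (step P c) Q (k - 1) -> reachP P c Q k.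
Proof. intros H1 H; replace k with (S (k - 1)) by lia; apply reachP_step; auto. Qed.

Lemma reachP_seq' P c (Q1 Q2 : config -> Prop) k1 k :
  reachP P c Q1 k1 -> k1 <= k -> (forall c', Q1 c' -> reachP P c' Q2 (k - k1)) -> reachP P c Q2 k.
Proof. intros H1 Hk H2. replace k with (k1 + (k - k1)) by lia. eapply reachP_seq; eauto. Qed.

Ltac stp := apply reachP_step'; [lia|]; unfold step at 1; simpl.

Lemma cmp_loop x : forall y R M, R 19 = x -> R 20 = y ->
 reachP prog (Cfg 62 R M) (fun c => mem c = M /\ (forall r, r <> 19 -> r <> 20 -> regs c r = R r) /\
   pc c = (if x <? y then 75 else if y <? x then 69 else 41)) (5 * x + 4).
Proof.
  induction x; intros y R M Hx Hy.
  - stp. rewrite Hx. simpl. stp. rewrite Hy. destruct y.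
    + simpl. apply reachP_done. simpl. split; auto.
    + simpl. stp. apply reachP_done. simpl. split; auto.
  - stp. rewrite Hx. simpl. stp. rewrite Hy. destruct y.
    + simpl. apply reachP_done. simpl. split; auto.
    + simpl. stp. stp. stp.
      eapply reachP_mono; [|eapply reachP_weak; [|apply (IHx y _ M)]].
      * lia.
      * intros c [H1 [H2 H3]]. split; [auto|split].
        -- intros r Hr1 Hr2. rewrite H2 by auto. unfold upd.
           rewrite (proj2 (Nat.eqb_neq r 20) Hr2), (proj2 (Nat.eqb_neq r 19) Hr1). auto.
        -- rewrite H3. simpl. auto.
      * unfold upd; simpl. rewrite Hx. auto.
      * unfold upd; simpl. rewrite Hy. auto.
Qed.

Definition memrep (w : list nat) (rho : nat -> nat) : nat -> nat :=
  fun i => if i <? length w then nth i w 0 else rho (i - length w).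

Lemma memrep_hi w rho x : memrep w rho (length w + x) = rho x.
Proof. unfold memrep. destruct (Nat.ltb_spec (length w + x) (length w)); [lia|]. f_equal; lia. Qed.

Lemma memrep_lo w rho i : i < length w -> memrep w rho i = nth i w 0.
Proof. unfold memrep. intros H; destruct (Nat.ltb_spec i (length w)); [auto|lia]. Qed.

Lemma memrep_upd w rho x v : upd (memrep w rho) (length w + x) v = memrep w (upd rho x v).
Proof.
  apply functional_extensionality; intros i. unfold upd, memrep.
  destruct (Nat.ltb_spec i (length w)).
  - destruct (Nat.eqb_spec i (length w + x)); [lia|auto].
  - destruct (Nat.eqb_spec i (length w + x)); destruct (Nat.eqb_spec (i - length w) x); auto; lia.
Qed.

Definition st3 := ((nat -> nat) * nat * nat)%type.

Definition proc (a b : nat) (s : st3) : option st3 :=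
  let '(rho, beta, ch) := s in
  if rho a <? S (rho b) then
    match beta with 0 => None | S beta' => Some (upd rho a (S (rho b)), beta', 1) end
  else if S (rho b) <? rho a then
    match beta with 0 => None | S beta' => Some (upd rho b (pred (rho a)), beta', 1) end
  else Some s.

Ltac rwR := repeat match goal with H : ?R ?r = _ |- context [?R ?r] => is_var R; rewrite H end.
Ltac rs := cbn [upd Nat.eqb] in *; rwR.
Ltac stp2 := rs; apply reachP_step'; [lia|]; unfold step at 1; simpl; rs.

Arguments proc : simpl never.
Definition frame1 := [0;1;2;3;4;7;8;12;13].

Lemma proc_ok w rho beta ch a b R :
 R 0 = 0 -> R 1 = 1 -> R 4 = length w -> R 14 = a -> R 12 = b -> R 5 = beta -> R 6 = ch ->
 reachP prog (Cfg 45 R (memrep w rho))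
  (fun c => match proc a b (rho,beta,ch) with
     | None => pc c = 97 /\ regs c 0 = 0
     | Some (rho',beta',ch') => pc c = 41 /\ mem c = memrep w rho' /\ regs c 5 = beta' /\
        regs c 6 = ch' /\ (forall r, In r frame1 -> regs c r = R r) end)
  (4*a + 4*b + 5*rho a + 30).
Proof.
  intros H0 H1 H4 Ha Hb Hbe Hch.
  stp2. stp2.
  eapply reachP_seq'; [apply (add_loop prog 47 15 11); try reflexivity; discriminate| |].
  { rs. lia. }
  intros c' Hc'; rewrite Hc'; clear c' Hc'.
  stp2. stp2. stp2.
  eapply reachP_seq'; [apply (add_loop prog 54 16 11); try reflexivity; discriminate| |].
  { rs. lia. }
  intros c' Hc'; rewrite Hc'; clear c' Hc'.
  stp2. rewrite memrep_hi. stp2. rewrite memrep_hi. stp2. stp2.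
  eapply reachP_seq'; [apply (cmp_loop (rho a) (S (rho b))); rs; reflexivity| |].
  { lia. }
  intros [p' R' M'] [HM [Hf Hp]]; simpl in HM, Hf, Hp; subst M'.
  Ltac specF Hf r := let E := fresh "E" in assert (E := Hf r ltac:(discriminate) ltac:(discriminate)); cbn [upd Nat.eqb] in E.
  specF Hf 0. specF Hf 1. specF Hf 2. specF Hf 3. specF Hf 4. specF Hf 5. specF Hf 6. specF Hf 7.
  specF Hf 8. specF Hf 12. specF Hf 13. specF Hf 15. specF Hf 16. specF Hf 17. specF Hf 18.
  clear Hf. rewrite ?H0, ?H1, ?H4, ?Ha, ?Hb, ?Hbe, ?Hch in *.
  unfold proc.
  destruct (Nat.ltb_spec (rho a) (S (rho b))).
  - rewrite Hp. stp2. destruct beta as [|beta'].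
    + simpl. apply reachP_done. simpl. auto.
    + simpl. stp2. stp2. stp2. rewrite memrep_upd. stp2. apply reachP_done. simpl.
      split; [auto|split; [auto|split; [auto|split; [auto|]]]].
      intros r Hr; simpl in Hr. rs.
      destruct Hr as [<-|[<-|[<-|[<-|[<-|[<-|[<-|[<-|[<-|[]]]]]]]]]]; rs; auto.
  - destruct (Nat.ltb_spec (S (rho b)) (rho a)).
    + rewrite Hp. stp2. destruct beta as [|beta'].
      * simpl. apply reachP_done. simpl. auto.
      * simpl. stp2. stp2. stp2. stp2. rewrite memrep_upd. stp2. apply reachP_done. simpl.
        split; [auto|split; [auto|split; [auto|split; [auto|]]]].
        intros r Hr; simpl in Hr. rs.
        destruct Hr as [<-|[<-|[<-|[<-|[<-|[<-|[<-|[<-|[<-|[]]]]]]]]]]; rs; auto.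
    + rewrite Hp. apply reachP_done. simpl.
      split; [auto|split; [auto|split; [auto|split; [auto|]]]].
      intros r Hr; simpl in Hr.
      destruct Hr as [<-|[<-|[<-|[<-|[<-|[<-|[<-|[<-|[<-|[]]]]]]]]]]; rs; auto.
Qed.

Fixpoint procA (A : list nat) (b : nat) (s : st3) : option st3 :=
  match A with
  | [] => Some s
  | a :: A' => match proc a b s with None => None | Some s' => procA A' b s' end
  end.

Lemma proc_bound a b rho beta ch V rho' beta' ch' :
  (forall x, rho x + beta <= V) -> proc a b (rho, beta, ch) = Some (rho', beta', ch') ->
  forall x, rho' x + beta' <= V.
Proof.
  intros HV Hp x. unfold proc in Hp.
  destruct (Nat.ltb_spec (rho a) (S (rho b))).
  - destruct beta as [|beta]; [discriminate|]. inversion Hp; subst.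
    unfold upd. destruct (Nat.eqb_spec x a); [|specialize (HV x); lia].
    specialize (HV b); lia.
  - destruct (Nat.ltb_spec (S (rho b)) (rho a)).
    + destruct beta as [|beta]; [discriminate|]. inversion Hp; subst.
      unfold upd. destruct (Nat.eqb_spec x b); [|specialize (HV x); lia].
      specialize (HV a); lia.
    + inversion Hp; subst; auto.
Qed.

Lemma procA_bound A b rho beta ch V rho' beta' ch' :
  (forall x, rho x + beta <= V) -> procA A b (rho, beta, ch) = Some (rho', beta', ch') ->
  forall x, rho' x + beta' <= V.
Proof.
  revert rho beta ch. induction A as [|a A IH]; intros rho beta ch HV Hp; cbn [procA] in Hp.
  - inversion Hp; subst; auto.
  - destruct (proc a b (rho, beta, ch)) as [[[r1 b1] c1]|] eqn:E; [|discriminate].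
    eapply IH; [|exact Hp]. eapply proc_bound; eauto.
Qed.

Lemma aloop_ok w b K V A : forall p rho beta ch R,
 R 0 = 0 -> R 1 = 1 -> R 4 = length w -> R 7 = p -> R 12 = b -> R 13 = length A ->
 R 5 = beta -> R 6 = ch ->
 (forall i, i < length A -> p + i < length w /\ nth (p + i) w 0 = nth i A 0) ->
 (forall a, In a A -> a < K) -> b < K -> (forall x, rho x + beta <= V) ->
 reachP prog (Cfg 41 R (memrep w rho))
  (fun c => match procA A b (rho,beta,ch) with
     | None => pc c = 97 /\ regs c 0 = 0
     | Some (rho',beta',ch') => pc c = 80 /\ mem c = memrep w rho' /\ regs c 5 = beta' /\
        regs c 6 = ch' /\ regs c 7 = p + length A /\
        (forall r, In r [0;1;2;3;4;8;12] -> regs c r = R r) end)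
  (length A * (8 * K + 5 * V + 40) + 1).
Proof.
  induction A as [|a A IH]; intros p rho beta ch R H0 H1 H4 H7 H12 H13 H5 H6 HA HK Hb HV.
  - simpl in H13. stp2. apply reachP_done. simpl. rwR.
    split; [auto|split; [auto|split; [auto|split; [auto|split; [lia|]]]]].
    intros r Hr; simpl in Hr.
    destruct Hr as [<-|[<-|[<-|[<-|[<-|[<-|[<-|[]]]]]]]]; rs; auto.
  - simpl in H13. stp2. stp2.
    destruct (HA 0 ltac:(simpl; lia)) as [Hlt Hnth]. rewrite Nat.add_0_r in Hlt, Hnth.
    rewrite memrep_lo by auto. rewrite Hnth. simpl nth.
    stp2. stp2.
    assert (Ha : a < K) by (apply HK; simpl; auto).
    assert (Hra : rho a <= V) by (specialize (HV a); lia).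
    eapply reachP_seq'; [apply (proc_ok w rho beta ch a b); rs; auto| |].
    { simpl length. nia. }
    simpl procA.
    destruct (proc a b (rho, beta, ch)) as [[[r1 b1] c1]|] eqn:E.
    + intros [p' R' M'] [Hp [HM [E5 [E6 Hf]]]]; simpl in Hp, HM, E5, E6, Hf; subst p' M'.
      eapply reachP_mono; [|eapply reachP_weak; [|apply (IH (S p) r1 b1 c1 R')]].
      * simpl length. nia.
      * destruct (procA A b (r1, b1, c1)) as [[[r2 b2] c2]|]; auto.
        intros c [Q1 [Q2 [Q3 [Q4 [Q5 Q6]]]]]. 
        split; [auto|split; [auto|split; [auto|split; [auto|split]]]].
        -- rewrite Q5. simpl length. lia.
        -- intros r Hr. rewrite Q6 by (simpl in *; tauto).
           rewrite Hf by (simpl in *; tauto). rs.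
           simpl in Hr. destruct Hr as [<-|[<-|[<-|[<-|[<-|[<-|[<-|[]]]]]]]]; auto.
      * rewrite Hf by (simpl; tauto). rs. auto.
      * rewrite Hf by (simpl; tauto). rs. auto.
      * rewrite Hf by (simpl; tauto). rs. auto.
      * rewrite Hf by (simpl; tauto). rs. lia.
      * rewrite Hf by (simpl; tauto). rs. auto.
      * rewrite Hf by (simpl; tauto). rs. lia.
      * auto.
      * auto.
      * intros i Hi. destruct (HA (S i) ltac:(simpl; lia)) as [X Y].
        split; [lia|]. replace (S p + i) with (p + S i) by lia. rewrite Y. reflexivity.
      * intros x Hx; apply HK; simpl; auto.
      * auto.
      * eapply proc_bound; eauto.
    + intros c Hc. apply reachP_done. exact Hc.
Qed.

Lemma skip_app (A l w : list nat) p : skipn p w = A ++ l ->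
  (forall i, i < length A -> p + i < length w /\ nth (p+i) w 0 = nth i A 0) /\
  skipn (p + length A) w = l.
Proof.
  intros H. split.
  - intros i Hi. split.
    + assert (E := length_skipn p w). rewrite H, length_app in E. lia.
    + rewrite <- nth_skipn, H, app_nth1; auto.
  - rewrite Nat.add_comm, <- skipn_skipn, H, skipn_app, skipn_all, Nat.sub_diag. reflexivity.
Qed.

Fixpoint passS (S : list implication) (s : st3) : option st3 :=
  match S with
  | [] => Some s
  | ab :: S' => match procA (fst ab) (snd ab) s with None => None | Some s' => passS S' s' end
  end.

Fixpoint passcost (S : list implication) (PC : nat) : nat :=
  match S with
  | [] => 1
  | ab :: S' => length (fst ab) * PC + 4 * length (fst ab) + 20 + passcost S' PC
  end.

Lemma passS_bound S rho beta ch V rho' beta' ch' :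
  (forall x, rho x + beta <= V) -> passS S (rho, beta, ch) = Some (rho', beta', ch') ->
  forall x, rho' x + beta' <= V.
Proof.
  revert rho beta ch. induction S as [|[A b] S IH]; intros rho beta ch HV Hp; cbn [passS fst snd] in Hp.
  - inversion Hp; subst; auto.
  - destruct (procA A b (rho, beta, ch)) as [[[r1 b1] c1]|] eqn:E; [|discriminate].
    eapply IH; [|exact Hp]. eapply procA_bound; eauto.
Qed.

Lemma pass_ok w K V rest : forall p rho beta ch R,
 R 0 = 0 -> R 1 = 1 -> R 4 = length w -> R 7 = p -> R 8 = length rest ->
 R 5 = beta -> R 6 = ch ->
 skipn p w = flat_map encode_impl rest ->
 (forall A b, In (A, b) rest -> b < K /\ forall a, In a A -> a < K) ->
 (forall x, rho x + beta <= V) ->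
 reachP prog (Cfg 30 R (memrep w rho))
  (fun c => match passS rest (rho,beta,ch) with
     | None => pc c = 97 /\ regs c 0 = 0
     | Some (rho',beta',ch') => pc c = 83 /\ mem c = memrep w rho' /\ regs c 5 = beta' /\
        regs c 6 = ch' /\ (forall r, In r [0;1;2;3;4] -> regs c r = R r) end)
  (passcost rest (8 * K + 5 * V + 40)).
Proof.
  induction rest as [|[A b] rest IH]; intros p rho beta ch R H0 H1 H4 H7 H8 H5 H6 Hw HK HV.
  - simpl in H8. cbn [passcost]. stp2. apply reachP_done. simpl. rwR.
    split; [auto|split; [auto|split; [auto|split; [auto|]]]].
    intros r Hr; simpl in Hr.
    destruct Hr as [<-|[<-|[<-|[<-|[<-|[]]]]]]; rs; auto.
  - simpl in H8. cbn [passcost fst snd].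
    assert (Hw' : skipn p w = [length A] ++ A ++ [b] ++ flat_map encode_impl rest).
    { rewrite Hw. simpl. unfold encode_impl. simpl. rewrite <- app_assoc. reflexivity. }
    destruct (skip_app [length A] _ w p Hw') as [Hk Hw1].
    destruct (Hk 0 ltac:(simpl; lia)) as [Hk1 Hk2]. clear Hk.
    rewrite Nat.add_0_r in Hk1, Hk2. simpl in Hk2. simpl length in Hw1.
    destruct (skip_app A _ w _ Hw1) as [HA Hw2].
    destruct (skip_app [b] _ w _ Hw2) as [Hb Hw3].
    destruct (Hb 0 ltac:(simpl; lia)) as [Hb1 Hb2]. clear Hb. simpl in Hb2.
    rewrite Nat.add_0_r in Hb1, Hb2. simpl length in Hw3.
    destruct (HK A b ltac:(simpl; auto)) as [HbK HaK].
    stp2. stp2. rewrite memrep_lo, Hk2 by auto.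
    stp2. stp2. stp2.
    eapply reachP_seq'; [apply (add_loop prog 35 10 11); try reflexivity; discriminate| |].
    { rs. simpl. lia. }
    intros c' Hc'; rewrite Hc'; clear c' Hc'.
    stp2. rewrite memrep_lo by lia. replace (S (p + length A)) with (p + 1 + length A) by lia.
    rewrite Hb2. stp2.
    eapply reachP_seq'; [apply (aloop_ok w b K V A (S p) rho beta ch); rs; auto| |].
    { replace (S p) with (p + 1) by lia. auto. }
    { simpl. nia. }
    cbn [passS fst snd].
    destruct (procA A b (rho, beta, ch)) as [[[r1 b1] c1]|] eqn:E.
    + intros [p' R' M'] [Hp [HM [E5 [E6 [E7 Hf]]]]]; simpl in Hp, HM, E5, E6, E7, Hf; subst p' M'.
      stp2. stp2. stp2.
      eapply reachP_mono; [|eapply reachP_weak; [|apply (IH (p + 1 + length A + 1) r1 b1 c1)]].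
      * simpl. lia.
      * destruct (passS rest (r1, b1, c1)) as [[[r2 b2] c2]|]; auto.
        intros c [Q1 [Q2 [Q3 [Q4 Q5]]]].
        split; [auto|split; [auto|split; [auto|split; [auto|]]]].
        intros r Hr. rewrite Q5 by auto. rs.
        simpl in Hr. destruct Hr as [<-|[<-|[<-|[<-|[<-|[]]]]]]; rs; rewrite Hf by (simpl; tauto); rs; auto.
      * rs. rewrite Hf by (simpl; tauto). rs. auto.
      * rs. rewrite Hf by (simpl; tauto). rs. auto.
      * rs. rewrite Hf by (simpl; tauto). rs. auto.
      * rs. lia.
      * rs. rewrite Hf by (simpl; tauto). rs. lia.
      * rs. auto.
      * rs. auto.
      * auto.
      * intros A' b' HI. apply HK. simpl; auto.
      * eapply procA_bound; eauto.
    + intros c Hc. apply reachP_done. exact Hc.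
Qed.

Fixpoint sumf (f : nat -> nat) (n : nat) : nat :=
  match n with 0 => 0 | S n' => sumf f n' + f n' end.

Lemma sumf_le f g n : (forall x, x < n -> f x <= g x) -> sumf f n <= sumf g n.
Proof. induction n; simpl; intros H; auto. specialize (IHn (fun x Hx => H x ltac:(lia))). specialize (H n). lia. Qed.

Lemma sumf_lt f g n y : (forall x, x < n -> f x <= g x) -> y < n -> f y < g y -> sumf f n < sumf g n.
Proof.
  induction n; simpl; intros H Hy Hlt; [lia|].
  destruct (Nat.eq_dec y n).
  - subst y. assert (sumf f n <= sumf g n) by (apply sumf_le; intros; apply H; lia). lia.
  - assert (sumf f n < sumf g n) by (apply IHn; auto; lia). specialize (H n). lia.
Qed.

Lemma sumf_bound f n c : (forall x, x < n -> f x <= c) -> sumf f n <= n * c.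
Proof. induction n; simpl; intros H; auto. specialize (IHn (fun x Hx => H x ltac:(lia))). specialize (H n). lia. Qed.

Lemma small_sol n Sigma : wf_base n Sigma -> forall s sg, sumf sg n = s -> is_rank Sigma sg ->
  exists sg', is_rank Sigma sg' /\ forall x, x < n -> sg' x < n.
Proof.
  intros Hwf s. induction s as [s IH] using lt_wf_ind. intros sg Hs Hr.
  destruct (classic (exists x0, x0 < n /\ n <= sg x0)) as [[x0 [Hx0 Hx0']]|Hno].
  2: { exists sg; split; auto. intros x Hx. destruct (Nat.lt_ge_cases (sg x) n); auto.
       exfalso; apply Hno; eauto. }
  destruct (classic (exists j, j < n /\ forall y, y < n -> sg y <> j)) as [[j [Hj Hjy]]|Hnj].
  - set (sg' := fun y => if j <? sg y then sg y - 1 else sg y).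
    apply (IH (sumf sg' n)) with (sg := sg').
    + rewrite <- Hs. apply (sumf_lt _ _ _ x0); auto.
      * intros x _; unfold sg'; destruct (Nat.ltb_spec j (sg x)); lia.
      * unfold sg'; destruct (Nat.ltb_spec j (sg x0)); lia.
    + reflexivity.
    + intros A b HI a Ha. specialize (Hr A b HI a Ha). destruct (Hwf A b HI) as [Hb _].
      specialize (Hjy b Hb). unfold sg'.
      destruct (Nat.ltb_spec j (sg a)); destruct (Nat.ltb_spec j (sg b)); lia.
  - exfalso.
    assert (Hall : forall j, j < n -> exists y, y < n /\ sg y = j).
    { intros j Hj. apply NNPP; intros Hn. apply Hnj. exists j; split; auto.
      intros y Hy Heq. apply Hn; eauto. }
    assert (HN : NoDup (sg x0 :: seq 0 n)).
    { constructor; [|apply seq_NoDup]. rewrite in_seq; lia. }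
    assert (HI : incl (sg x0 :: seq 0 n) (map sg (seq 0 n))).
    { intros v Hv. destruct Hv as [<-|Hv].
      - apply in_map; rewrite in_seq; lia.
      - rewrite in_seq in Hv. destruct (Hall v ltac:(lia)) as [y [Hy <-]].
        apply in_map; rewrite in_seq; lia. }
    assert (L := NoDup_incl_length HN HI). simpl in L. rewrite length_map, length_seq in L. lia.
Qed.

Definition INV n Sigma (rho : nat -> nat) beta :=
  (forall sg, is_rank Sigma sg -> forall x, rho x <= sg x) /\ n * n <= sumf rho n + beta.

Lemma proc_inv n Sigma a b rho beta ch rho' beta' ch' :
  a < n -> b < n -> (forall sg, is_rank Sigma sg -> sg a = sg b + 1) ->
  INV n Sigma rho beta -> proc a b (rho, beta, ch) = Some (rho', beta', ch') ->
  INV n Sigma rho' beta' /\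
  ((ch' = ch /\ rho' = rho /\ beta' = beta /\ rho a = rho b + 1) \/ (ch' = 1 /\ beta' < beta)).
Proof.
  intros Ha Hb Hc [Hlow Hsum] Hp. unfold proc in Hp.
  destruct (Nat.ltb_spec (rho a) (S (rho b))).
  - destruct beta as [|beta]; [discriminate|]. inversion Hp; subst. split; [split|right; split; auto].
    + intros sg Hsg x. unfold upd. destruct (Nat.eqb_spec x a); auto.
      subst. specialize (Hc sg Hsg). specialize (Hlow sg Hsg b). lia.
    + assert (sumf rho n < sumf (upd rho a (S (rho b))) n); [|lia].
      apply (sumf_lt _ _ _ a); auto.
      * intros x _; unfold upd; destruct (Nat.eqb_spec x a); subst; lia.
      * unfold upd; rewrite Nat.eqb_refl; auto.
  - destruct (Nat.ltb_spec (S (rho b)) (rho a)).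
    + destruct beta as [|beta]; [discriminate|]. inversion Hp; subst. split; [split|right; split; auto].
      * intros sg Hsg x. unfold upd. destruct (Nat.eqb_spec x b); auto.
        subst. specialize (Hc sg Hsg). specialize (Hlow sg Hsg a). lia.
      * assert (sumf rho n < sumf (upd rho b (pred (rho a))) n); [|lia].
        apply (sumf_lt _ _ _ b); auto.
        -- intros x _; unfold upd; destruct (Nat.eqb_spec x b); subst; lia.
        -- unfold upd; rewrite Nat.eqb_refl; lia.
    + inversion Hp; subst. split; [split; auto|left]. repeat split; auto. lia.
Qed.

Lemma proc_none n Sigma a b rho beta ch :
  wf_base n Sigma -> a < n -> b < n -> (forall sg, is_rank Sigma sg -> sg a = sg b + 1) ->
  INV n Sigma rho beta -> proc a b (rho, beta, ch) = None -> ~ exists sg, is_rank Sigma sg.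
Proof.
  intros Hwf Ha Hb Hc [Hlow Hsum] Hp [sg0 Hsg0].
  destruct (small_sol n Sigma Hwf _ sg0 eq_refl Hsg0) as [sg [Hsg Hsmall]].
  assert (HB : sumf sg n <= n * n) by (apply sumf_bound; intros x Hx; specialize (Hsmall x Hx); lia).
  specialize (Hc sg Hsg). assert (Hl := Hlow sg Hsg).
  unfold proc in Hp.
  destruct (Nat.ltb_spec (rho a) (S (rho b))).
  - destruct beta; [|discriminate].
    assert (sumf rho n < sumf sg n); [|lia].
    apply (sumf_lt _ _ _ a); auto. specialize (Hl b). lia.
  - destruct (Nat.ltb_spec (S (rho b)) (rho a)); [|discriminate].
    destruct beta; [|discriminate].
    assert (sumf rho n < sumf sg n); [|lia].
    apply (sumf_lt _ _ _ b); auto. specialize (Hl a). lia.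
Qed.

Lemma procA_inv n Sigma A b : b < n ->
  (forall a, In a A -> a < n /\ forall sg, is_rank Sigma sg -> sg a = sg b + 1) ->
  forall rho beta ch rho' beta' ch',
  INV n Sigma rho beta -> procA A b (rho, beta, ch) = Some (rho', beta', ch') ->
  INV n Sigma rho' beta' /\
  ((ch' = ch /\ rho' = rho /\ beta' = beta /\ forall a, In a A -> rho a = rho b + 1) \/ (ch' = 1 /\ beta' < beta)).
Proof.
  intros Hb. induction A as [|a A IH]; intros HA rho beta ch rho' beta' ch' HI Hp; cbn [procA] in Hp.
  - inversion Hp; subst. split; auto. left; repeat split; auto. intros a [].
  - destruct (proc a b (rho, beta, ch)) as [[[r1 b1] c1]|] eqn:E; [|discriminate].
    destruct (HA a (or_introl eq_refl)) as [Ha Hc].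
    destruct (proc_inv n Sigma a b rho beta ch r1 b1 c1 Ha Hb Hc HI E) as [HI1 H1].
    destruct (IH (fun x Hx => HA x (or_intror Hx)) r1 b1 c1 rho' beta' ch' HI1 Hp) as [HI2 H2].
    split; auto.
    destruct H1 as [[-> [-> [-> Hab]]]|[-> Hlt]]; destruct H2 as [[-> [-> [-> Hrest]]]|[-> Hlt2]].
    + left. repeat split; auto. intros x [<-|Hx]; auto.
    + right; auto.
    + right; split; auto.
    + right; split; auto; lia.
Qed.

Lemma procA_none n Sigma A b : wf_base n Sigma -> b < n ->
  (forall a, In a A -> a < n /\ forall sg, is_rank Sigma sg -> sg a = sg b + 1) ->
  forall rho beta ch, INV n Sigma rho beta -> procA A b (rho, beta, ch) = None ->
  ~ exists sg, is_rank Sigma sg.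
Proof.
  intros Hwf Hb. induction A as [|a A IH]; intros HA rho beta ch HI Hp; cbn [procA] in Hp.
  - discriminate.
  - destruct (HA a (or_introl eq_refl)) as [Ha Hc].
    destruct (proc a b (rho, beta, ch)) as [[[r1 b1] c1]|] eqn:E.
    + destruct (proc_inv n Sigma a b rho beta ch r1 b1 c1 Ha Hb Hc HI E) as [HI1 _].
      exact (IH (fun x Hx => HA x (or_intror Hx)) r1 b1 c1 HI1 Hp).
    + exact (proc_none n Sigma a b rho beta ch Hwf Ha Hb Hc HI E).
Qed.

Lemma impl_facts n Sigma A b : wf_base n Sigma -> In (A, b) Sigma ->
  b < n /\ (forall a, In a A -> a < n /\ forall sg, is_rank Sigma sg -> sg a = sg b + 1).
Proof.
  intros Hwf HI. destruct (Hwf A b HI) as [Hb HA]. split; auto.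
  intros a Ha; split; auto. intros sg Hsg; apply (Hsg A b HI a Ha).
Qed.

Lemma passS_inv n Sigma rest : wf_base n Sigma -> (forall ab, In ab rest -> In ab Sigma) ->
  forall rho beta ch rho' beta' ch',
  INV n Sigma rho beta -> passS rest (rho, beta, ch) = Some (rho', beta', ch') ->
  INV n Sigma rho' beta' /\
  ((ch' = ch /\ rho' = rho /\ beta' = beta /\
    forall A b, In (A, b) rest -> forall a, In a A -> rho a = rho b + 1) \/ (ch' = 1 /\ beta' < beta)).
Proof.
  intros Hwf. induction rest as [|[A b] rest IH]; intros Hsub rho beta ch rho' beta' ch' HI Hp;
    cbn [passS fst snd] in Hp.
  - inversion Hp; subst. split; auto. left; repeat split; auto. intros A b [].
  - destruct (procA A b (rho, beta, ch)) as [[[r1 b1] c1]|] eqn:E; [|discriminate].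
    destruct (impl_facts n Sigma A b Hwf (Hsub _ (or_introl eq_refl))) as [Hb HA].
    destruct (procA_inv n Sigma A b Hb HA rho beta ch r1 b1 c1 HI E) as [HI1 H1].
    destruct (IH (fun x Hx => Hsub x (or_intror Hx)) r1 b1 c1 rho' beta' ch' HI1 Hp) as [HI2 H2].
    split; auto.
    destruct H1 as [[-> [-> [-> Hab]]]|[-> Hlt]]; destruct H2 as [[-> [-> [-> Hrest]]]|[-> Hlt2]].
    + left. repeat split; auto. intros A' b' [Heq|Hx]; [inversion Heq; subst; auto|eauto].
    + right; auto.
    + right; split; auto.
    + right; split; auto; lia.
Qed.

Lemma passS_none n Sigma rest : wf_base n Sigma -> (forall ab, In ab rest -> In ab Sigma) ->
  forall rho beta ch, INV n Sigma rho beta -> passS rest (rho, beta, ch) = None ->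
  ~ exists sg, is_rank Sigma sg.
Proof.
  intros Hwf. induction rest as [|[A b] rest IH]; intros Hsub rho beta ch HI Hp;
    cbn [passS fst snd] in Hp.
  - discriminate.
  - destruct (impl_facts n Sigma A b Hwf (Hsub _ (or_introl eq_refl))) as [Hb HA].
    destruct (procA A b (rho, beta, ch)) as [[[r1 b1] c1]|] eqn:E.
    + destruct (procA_inv n Sigma A b Hb HA rho beta ch r1 b1 c1 HI E) as [HI1 _].
      exact (IH (fun x Hx => Hsub x (or_intror Hx)) r1 b1 c1 HI1 Hp).
    + exact (procA_none n Sigma A b Hwf Hb HA rho beta ch HI E).
Qed.

Lemma rounds_ok n Sigma : wf_base n Sigma -> forall beta rho R,
 R 0 = 0 -> R 1 = 1 -> R 3 = length Sigma -> R 4 = length (encode n Sigma) -> R 5 = beta ->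
 (forall x, rho x + beta <= n*n) -> INV n Sigma rho beta ->
 reachP prog (Cfg 26 R (memrep (encode n Sigma) rho))
   (fun c => (pc c = 97 /\ regs c 0 = 0 /\ ~ exists sg, is_rank Sigma sg) \/
             (pc c = 85 /\ (forall r, In r [0;1;2;4] -> regs c r = R r) /\
              exists rho', mem c = memrep (encode n Sigma) rho' /\ is_rank Sigma rho'))
   ((beta + 1) * (passcost Sigma (8*n + 5*(n*n) + 40) + 10)).
Proof.
  intros Hwf beta. induction beta as [beta IH] using lt_wf_ind.
  intros rho R H0 H1 H3 H4 H5 HV HI.
  remember (passcost Sigma (8*n + 5*(n*n) + 40)) as T eqn:HT.
  stp2. stp2. stp2. stp2.
  eapply (reachP_seq' _ _ _ _ T); [rewrite HT; apply (pass_ok (encode n Sigma) n (n*n) Sigma 2 rho beta 0); rs; auto| |].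
  { nia. }
  destruct (passS Sigma (rho, beta, 0)) as [[[r1 b1] c1]|] eqn:E.
  - destruct (passS_inv n Sigma Sigma Hwf (fun x Hx => Hx) rho beta 0 r1 b1 c1 HI E) as [HI1 Hd].
    intros [p' R' M'] [Hp [HM [E5 [E6 Hf]]]]; simpl in Hp, HM, E5, E6, Hf; subst p' M'.
    destruct c1 as [|c1].
    + stp2. apply reachP_done. right. simpl. split; auto. split.
      * intros r Hr. rewrite Hf by (simpl in *; tauto). rs. simpl in Hr.
        destruct Hr as [<-|[<-|[<-|[<-|[]]]]]; rs; auto.
      * exists r1; split; auto.
        destruct Hd as [[_ [-> [_ Hall]]]|[Habs _]]; [|discriminate].
        intros A b HIn a Ha. apply (Hall A b HIn a Ha).
    + destruct Hd as [[Habs _]|[_ Hlt]]; [discriminate|].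
      stp2. stp2.
      eapply reachP_mono; [|eapply reachP_weak; [|apply (IH b1 Hlt r1)]].
      * nia.
      * intros c [Hc|[Hc1 [Hc2 Hc3]]]; [left; auto|right; split; auto; split; auto].
        intros r Hr. rewrite Hc2 by auto. rs.
        simpl in Hr. destruct Hr as [<-|[<-|[<-|[<-|[]]]]]; rs; rewrite Hf by (simpl; tauto); rs; auto.
      * rs. rewrite Hf by (simpl; tauto). rs. auto.
      * rs. rewrite Hf by (simpl; tauto). rs. auto.
      * rs. rewrite Hf by (simpl; tauto). rs. auto.
      * rs. rewrite Hf by (simpl; tauto). rs. auto.
      * rs. auto.
      * eapply passS_bound; eauto.
      * auto.
  - intros c [Hc1 Hc2]. apply reachP_done. left. split; auto. split; auto.
    eapply passS_none; eauto.
Qed.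

Fixpoint parsecost (S : list implication) : nat :=
  match S with [] => 1 | ab :: S' => 4 * length (fst ab) + 8 + parsecost S' end.

Lemma parse_ok w rest : forall p R M,
  (forall i, i < length w -> M i = nth i w 0) -> R 7 = p -> R 8 = length rest -> skipn p w = flat_map encode_impl rest ->
  reachP prog (Cfg 6 R M)
    (fun c => pc c = 16 /\ mem c = M /\ regs c 7 = p + length (flat_map encode_impl rest) /\
       forall r, In r [0;1;2;3;5] -> regs c r = R r)
    (parsecost rest).
Proof.
  induction rest as [|[A b] rest IH]; intros p R M HM H7 H8 Hw.
  - cbn [parsecost]. simpl in H8. stp2. apply reachP_done. simpl. rs.
    split; [auto|split; [auto|split; [lia|intros r Hr; rs; auto]]].
  - cbn [parsecost fst snd]. simpl in H8.
    assert (Hw' : skipn p w = [length A] ++ (A ++ [b] ++ flat_map encode_impl rest)).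
    { rewrite Hw. simpl. unfold encode_impl. simpl. rewrite <- app_assoc. reflexivity. }
    destruct (skip_app [length A] _ w p Hw') as [Hk Hw1].
    destruct (Hk 0 ltac:(simpl; lia)) as [Hk1 Hk2]. clear Hk.
    rewrite Nat.add_0_r in Hk1, Hk2. simpl in Hk2. simpl length in Hw1.
    rewrite app_assoc in Hw1.
    destruct (skip_app (A ++ [b]) _ w _ Hw1) as [_ Hw2].
    rewrite length_app in Hw2. simpl length in Hw2.
    stp2. stp2. rewrite HM, Hk2 by auto.
    eapply reachP_seq'; [apply (add_loop prog 8 7 9); try reflexivity; discriminate| |].
    { rs. lia. }
    intros c' Hc'; rewrite Hc'; clear c' Hc'.
    stp2. stp2. stp2. stp2.
    eapply reachP_mono; [|eapply reachP_weak; [|apply (IH (p + 1 + (length A + 1)))]].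
    + rs. lia.
    + intros c [Q1 [Q2 [Q3 Q4]]]. split; [auto|split; [auto|split]].
      * rewrite Q3. rewrite !length_app. simpl. lia.
      * intros r Hr. rewrite Q4 by auto. simpl in Hr.
        destruct Hr as [<-|[<-|[<-|[<-|[<-|[]]]]]]; rs; auto.
    + auto.
    + rs. lia.
    + rs. lia.
    + auto.
Qed.


Lemma budget_ok n : forall i R M, R 21 = i -> R 2 = n ->
  reachP prog (Cfg 18 R M)
    (fun c => pc c = 26 /\ mem c = M /\ regs c 5 = R 5 + i * n /\
       forall r, In r [0;1;2;3;4] -> regs c r = R r)
    (i * (4 * n + 5) + 1).
Proof.
  induction i as [|i IH]; intros R M H21 H2.
  - stp2. apply reachP_done. simpl.
    split; [auto|split; [auto|split; [lia|intros r Hr; rs; auto]]].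
  - stp2. stp2.
    eapply reachP_seq'; [apply (add_loop prog 20 5 11); try reflexivity; discriminate| |].
    { rs. nia. }
    intros c' Hc'; rewrite Hc'; clear c' Hc'.
    stp2. stp2.
    eapply reachP_mono; [|eapply reachP_weak; [|apply (IH _ M)]].
    + rs. nia.
    + intros c [Q1 [Q2 [Q3 Q4]]]. split; [auto|split; [auto|split]].
      * rewrite Q3. rs. lia.
      * intros r Hr. rewrite Q4 by auto. simpl in Hr.
        destruct Hr as [<-|[<-|[<-|[<-|[<-|[]]]]]]; rs; auto.
    + rs. lia.
    + rs. auto.
Qed.

Lemma copy_ok L rho n : forall k d R M, k + d = n -> R 22 = L + d -> R 23 = 1 + d -> R 21 = k -> 1 <= L ->
  (forall x, d <= x -> M (L + x) = rho x) -> (forall x, x < d -> M (1 + x) = rho x) ->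
  reachP prog (Cfg 88 R M)
    (fun c => pc c = 95 /\ (forall x, x < n -> mem c (1 + x) = rho x) /\
       forall r, In r [0;1] -> regs c r = R r)
    (7 * k + 1).
Proof.
  induction k as [|k IH]; intros d R M Hkd H22 H23 H21 HL Hhi Hlo.
  - stp2. apply reachP_done. simpl.
    split; [auto|split; [intros x Hx; apply Hlo; lia|intros r Hr; rs; auto]].
  - stp2. stp2. stp2. stp2. stp2. stp2. stp2.
    eapply reachP_mono; [|eapply reachP_weak; [|apply (IH (S d))]].
    + lia.
    + intros c [Q1 [Q2 Q3]]. split; [auto|split; [auto|]].
      intros r Hr. rewrite Q3 by auto. simpl in Hr.
      destruct Hr as [<-|[<-|[]]]; rs; auto.
    + lia.
    + rs. lia.
    + rs. lia.
    + rs. lia.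
    + auto.
    + intros x Hx. unfold upd.
      match goal with |- context [if ?a =? ?b then _ else _] => destruct (Nat.eqb_spec a b) end; [lia|].
      apply Hhi; lia.
    + intros x Hx. unfold upd.
      match goal with |- context [if ?a =? ?b then _ else _] => destruct (Nat.eqb_spec a b) end.
      * assert (x = d) by lia. subst. rewrite Hhi; auto.
      * apply Hlo; lia.
Qed.

Lemma init_mem w : (fun i => nth i w 0) = memrep w (fun _ => 0).
Proof.
  apply functional_extensionality; intros i. unfold memrep.
  destruct (Nat.ltb_spec i (length w)); auto. apply nth_overflow; auto.
Qed.

Lemma len_encode n Sigma : length (encode n Sigma) = 2 + length (flat_map encode_impl Sigma).
Proof. reflexivity. Qed.

Lemma main_reach n Sigma : wf_base n Sigma ->
  reachP prog (init (encode n Sigma))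
    (fun c => halted prog c /\ correct_output Sigma (mem c))
    (parsecost Sigma + n * (4 * n + 5) + (n * n + 1) * (passcost Sigma (8*n + 5*(n*n) + 40) + 10) + 7 * n + 30).
Proof.
  intros Hwf.
  remember (parsecost Sigma) as P1 eqn:HP1.
  remember (n * (4 * n + 5)) as P2 eqn:HP2.
  remember ((n * n + 1) * (passcost Sigma (8*n + 5*(n*n) + 40) + 10)) as P3 eqn:HP3.
  unfold init. rewrite init_mem.
  set (w := encode n Sigma).
  assert (Hw0 : memrep w (fun _ => 0) 0 = n) by reflexivity.
  assert (Hw1 : memrep w (fun _ => 0) 1 = length Sigma) by reflexivity.
  stp2. stp2. rewrite Hw0. stp2. rewrite Hw1. stp2. stp2. stp2.
  eapply (reachP_seq' _ _ _ _ P1); [rewrite HP1; apply (parse_ok w Sigma 2); rs; auto| |].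
  { intros i Hi. apply memrep_lo; auto. }
  { lia. }
  intros [p' R' M'] [Hp [HM [E7 Hf]]]; simpl in Hp, HM, E7, Hf; subst p' M'.
  assert (F0 : R' 0 = 0) by (rewrite Hf by (simpl; tauto); rs; auto).
  assert (F1 : R' 1 = 1) by (rewrite Hf by (simpl; tauto); rs; auto).
  assert (F2 : R' 2 = n) by (rewrite Hf by (simpl; tauto); rs; auto).
  assert (F3 : R' 3 = length Sigma) by (rewrite Hf by (simpl; tauto); rs; auto).
  assert (F5 : R' 5 = 0) by (rewrite Hf by (simpl; tauto); rs; auto).
  clear Hf.
  stp2. stp2.
  eapply (reachP_seq' _ _ _ _ (P2 + 1)); [rewrite HP2; apply (budget_ok n n); rs; auto| |].
  { lia. }
  intros [p' R2 M'] [Hp [HM [E5 Hf]]]; simpl in Hp, HM, E5, Hf; subst p' M'.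
  assert (G0 : R2 0 = 0) by (rewrite Hf by (simpl; tauto); rs; auto).
  assert (G1 : R2 1 = 1) by (rewrite Hf by (simpl; tauto); rs; auto).
  assert (G2 : R2 2 = n) by (rewrite Hf by (simpl; tauto); rs; auto).
  assert (G3 : R2 3 = length Sigma) by (rewrite Hf by (simpl; tauto); rs; auto).
  assert (G4 : R2 4 = length w) by (rewrite Hf by (simpl; tauto); rs; auto).
  assert (E5' : R2 5 = n * n) by (rewrite E5; rs; lia). clear E5.
  clear Hf.
  eapply (reachP_seq' _ _ _ _ P3); [rewrite HP3; apply (rounds_ok n Sigma Hwf (n * n)); auto| |].
  { split; [intros; lia|]. lia. }
  { lia. }
  intros [p' R3 M3] [[Hp [H0 Hno]]|[Hp [Hf [rho' [HM Hrk]]]]].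
  - simpl in Hp, H0, Hno; subst p'. stp2. apply reachP_done. split.
    + unfold halted; simpl. lia.
    + unfold correct_output; simpl. rewrite upd_same. split; [|intros []; auto].
      split; [intros X; exfalso; auto|intros []; auto].
  - simpl in Hp, Hf, HM; subst p' M3.
    assert (K0 : R3 0 = 0) by (rewrite Hf by (simpl; tauto); auto).
    assert (K1 : R3 1 = 1) by (rewrite Hf by (simpl; tauto); auto).
    assert (K2 : R3 2 = n) by (rewrite Hf by (simpl; tauto); auto).
    assert (K4 : R3 4 = length w) by (rewrite Hf by (simpl; tauto); auto).
    clear Hf.
    stp2. stp2. stp2.
    eapply reachP_seq'; [apply (copy_ok (length w) rho' n n 0); rs; auto| |].
    { unfold w; rewrite len_encode; lia. }
    { intros x _; apply memrep_hi. }
    { intros x Hx; lia. }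
    { lia. }
    intros [p' R4 M4] [Hp [HM Hf]]; simpl in Hp, HM, Hf; subst p'.
    assert (L0 : R4 0 = 0) by (rewrite Hf by (simpl; tauto); rs; auto).
    assert (L1 : R4 1 = 1) by (rewrite Hf by (simpl; tauto); rs; auto).
    stp2. stp2. apply reachP_done. split.
    + unfold halted; simpl. lia.
    + unfold correct_output; simpl. rewrite upd_same. split.
      * split; [intros; discriminate|intros _; exists rho'; auto].
      * intros _ A b HIn a Ha. destruct (Hwf A b HIn) as [Hb HA].
        rewrite !upd_other by lia. rewrite !HM by auto. apply Hrk with A; auto.
Qed.

Definition szS (Sigma : list implication) := fold_right (fun ab s => length (fst ab) + 1 + s) 0 Sigma.

Lemma parsecost_le Sigma : parsecost Sigma <= 8 * szS Sigma + 1.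
Proof. induction Sigma as [|[A b] S IH]; simpl; lia. Qed.

Lemma passcost_le Sigma PC : passcost Sigma PC <= szS Sigma * (PC + 24) + 1.
Proof. induction Sigma as [|[A b] S IH]; simpl in *; nia. Qed.

Lemma poly_bound n z s : n <= s -> z <= s ->
  8 * z + 1 + n * (4 * n + 5) + (n * n + 1) * (z * (8*n + 5*(n*n) + 40 + 24) + 1 + 10) + 7 * n + 30
  <= 1000 * (s + 1) ^ 5.
Proof.
  intros Hn Hz. set (S := s + 1).
  assert (H1 : 1 <= S) by lia. assert (Hs : s <= S) by lia.
  assert (S2 : S <= S * S) by nia.
  assert (S3 : S * S <= S * S * S) by nia.
  assert (S4 : S * S * S <= S * S * S * S) by nia.
  assert (S5 : S * S * S * S <= S * S * S * S * S) by nia.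
  assert (E : S ^ 5 = S * S * S * S * S) by (simpl; ring).
  rewrite E.
  assert (A1 : n * n <= S * S) by nia.
  assert (A2 : z * (8*n + 5*(n*n) + 40 + 24) + 1 + 10 <= 88 * (S * S * S)).
  { assert (z * (8*n) <= 8 * (S*S)) by nia.
    assert (z * (5 * (n*n)) <= 5 * (S*S*S)) by nia.
    assert (z * 64 <= 64 * S) by nia. nia. }
  assert (A3 : (n * n + 1) * (z * (8*n + 5*(n*n) + 40 + 24) + 1 + 10) <= (2 * (S * S)) * (88 * (S * S * S))).
  { apply Nat.mul_le_mono; nia. }
  assert (A4 : n * (4 * n + 5) <= 9 * (S * S)) by nia.
  nia.
Qed.

Theorem proposition5 :
  exists (P : program) (c k : nat),
    forall (n : nat) (Sigma : list implication),
      wf_base n Sigma ->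
      exists t : nat,
        t <= c * (base_size n Sigma + 1) ^ k /\
        halted P (exec P t (init (encode n Sigma))) /\
        correct_output Sigma (mem (exec P t (init (encode n Sigma)))).
Proof.
  exists prog, 1000, 5. intros n Sigma Hwf.
  destruct (main_reach n Sigma Hwf) as [t [Ht [Hh Hc]]].
  exists t. split; [|auto].
  assert (Hb : base_size n Sigma = n + szS Sigma) by reflexivity.
  rewrite Hb.
  eapply Nat.le_trans; [exact Ht|].
  eapply Nat.le_trans; [|apply (poly_bound n (szS Sigma)); lia].
  assert (X1 := parsecost_le Sigma).
  assert (X2 := passcost_le Sigma (8*n + 5*(n*n) + 40)).
  assert (X3 : (n * n + 1) * (passcost Sigma (8*n + 5*(n*n) + 40) + 10) <=
               (n * n + 1) * (szS Sigma * (8*n + 5*(n*n) + 40 + 24) + 1 + 10)).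
  { apply Nat.mul_le_mono_l. lia. }
  lia.
Qed.
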